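(* Consider the delay differential system \[ \begin{aligned} \dot T(t)&= s-dT(t)+aT(t)\Big(1-\frac{T(t)+I(t)}{T_{\max}}\Big)-\frac{bT(t)V(t)}{1+\alpha V(t)},\\ \dot I(t)&= \frac{bT(t-\tau)V(t-\tau)}{1+\alpha V(t-\tau)}+aI(t)\Big(1-\frac{T(t)+I(t)}{T_{\max}}\Big)-\mu I(t),\\ \dot V(t)&= pI(t)-cV(t), \end{aligned} \] with positive constants $s,d,a,T_{\max},b,\alpha,\mu,p,c$ satisfying $d\le\mu$, and $\tau\ge0$. Let \[ T_0=\frac{T_{\max}}{2a}\Big(a-d+\sqrt{(a-d)^2+\tfrac{4as}{T_{\max}}}\Big),\qquad R_0=\frac{1}{\mu}\Big[\frac{bpT_0}{c}+a\Big(1-\frac{T_0}{T_{\max}}\Big)\Big]. \] If $R_0>1$, then the system is permanent.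
   Context: The system is permanent if it is dissipative (all solutions with positive initial data are ultimately bounded by a constant independent of the initial data) and uniformly persistent: there is $\eta>0$, independent of the initial data, such that every solution with positive continuous initial data on $[-\tau,0]$ satisfies $\liminf_{t\to\infty}T(t)\ge\eta$, $\liminf_{t\to\infty}I(t)\ge\eta$, $\liminf_{t\to\infty}V(t)\ge\eta$. *)

(* Defs.v *)
From Stdlib Require Import Reals Lra.
Open Scope R_scope.

Definition cont_on_from (tau : R) (f : R -> R) : Prop :=
  forall t, -tau <= t ->
    forall eps, 0 < eps -> exists delta, 0 < delta /\
      forall x, -tau <= x -> Rabs (x - t) < delta -> Rabs (f x - f t) < eps.

Definition cont_on_init (tau : R) (f : R -> R) : Prop :=
  forall t, -tau <= t <= 0 ->
    forall eps, 0 < eps -> exists delta, 0 < delta /\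
      forall x, -tau <= x <= 0 -> Rabs (x - t) < delta -> Rabs (f x - f t) < eps.

Definition is_solution (s d a Tmax b alpha mu p c tau : R)
    (T I V : R -> R) : Prop :=
  cont_on_from tau T /\ cont_on_from tau I /\ cont_on_from tau V /\
  forall t, 0 < t ->
    derivable_pt_lim T t
      (s - d * T t + a * T t * (1 - (T t + I t) / Tmax)
         - b * T t * V t / (1 + alpha * V t)) /\
    derivable_pt_lim I t
      (b * T (t - tau) * V (t - tau) / (1 + alpha * V (t - tau))
         + a * I t * (1 - (T t + I t) / Tmax) - mu * I t) /\
    derivable_pt_lim V t (p * I t - c * V t).

Definition positive_initial_data (tau : R) (T I V : R -> R) : Prop :=
  cont_on_init tau T /\ cont_on_init tau I /\ cont_on_init tau V /\
  forall th, -tau <= th <= 0 -> 0 < T th /\ 0 < I th /\ 0 < V th.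

Definition T0 (s d a Tmax : R) : R :=
  Tmax / (2 * a) * (a - d + sqrt ((a - d) ^ 2 + 4 * a * s / Tmax)).

Definition basic_repr_R0 (s d a Tmax b mu p c : R) : R :=
  / mu * (b * p * T0 s d a Tmax / c + a * (1 - T0 s d a Tmax / Tmax)).

Definition liminf_ge (f : R -> R) (eta : R) : Prop :=
  forall eps, 0 < eps -> exists t0, forall t, t0 <= t -> eta - eps < f t.

(* Permanence: dissipative + uniformly persistent, with constants
   independent of the initial data. *)
Definition permanent (s d a Tmax b alpha mu p c tau : R) : Prop :=
  exists M eta, 0 < eta /\
    forall T I V : R -> R,
      positive_initial_data tau T I V ->
      is_solution s d a Tmax b alpha mu p c tau T I V ->
      (exists t0, forall t, t0 <= t -> T t <= M /\ I t <= M /\ V t <= M) /\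
      liminf_ge T eta /\ liminf_ge I eta /\ liminf_ge V eta.

(* Main.v *)
Require Import Defs.
From Stdlib Require Import Reals Lra Classical.
Open Scope R_scope.

Lemma cont_of_deriv f x l : derivable_pt_lim f x l -> continuity_pt f x.
Proof. intro H. apply derivable_continuous_pt. exists l. exact H. Qed.

Lemma deriv_exp_lin K x : derivable_pt_lim (fun t => exp (K * t)) x (K * exp (K * x)).
Proof.
  assert (H := derivable_pt_lim_comp (fun t => K * t) exp x K (exp (K*x))).
  replace (K * exp (K*x)) with (exp (K*x) * K) by ring.
  apply H.
  - assert (H1 := derivable_pt_lim_scal id K x 1 (derivable_pt_lim_id x)).
    unfold mult_real_fct, id in H1. rewrite Rmult_1_r in H1. exact H1.
  - apply derivable_pt_lim_exp.
Qed.

Lemma gron_lo F dF K q a b : a <= b ->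
  (forall t, a <= t <= b -> derivable_pt_lim F t (dF t)) ->
  (forall t, a < t < b -> dF t >= - K * (F t - q)) ->
  F b - q >= (F a - q) * exp (- K * (b - a)).
Proof.
  intros Hab Hd Hineq.
  destruct (Req_dec a b) as [->|Hne].
  { replace (-K*(b-b)) with 0 by ring. rewrite exp_0. lra. }
  set (G := fun t => (F t - q) * exp (K * t)).
  assert (HG : forall t, a <= t <= b -> derivable_pt_lim G t (dF t * exp (K*t) + (F t - q) * (K * exp (K*t)))).
  { intros t Ht. unfold G.
    apply (derivable_pt_lim_mult (fun t => F t - q) (fun t => exp (K*t))).
    - replace (dF t) with (dF t - 0) by ring.
      apply (derivable_pt_lim_minus F (fun _ => q)). apply Hd; auto. apply derivable_pt_lim_const.
    - apply deriv_exp_lin. }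
  destruct (MVT_cor2 G _ a b ltac:(lra) HG) as [c0 [Heq Hc]].
  assert (Hpos : 0 <= dF c0 * exp (K * c0) + (F c0 - q) * (K * exp (K * c0))).
  { specialize (Hineq c0 Hc). assert (E := exp_pos (K*c0)).
    replace (dF c0 * exp (K * c0) + (F c0 - q) * (K * exp (K * c0))) with
      ((dF c0 + K * (F c0 - q)) * exp (K*c0)) by ring.
    apply Rmult_le_pos; lra. }
  assert (Hgb : G a <= G b) by nra.
  unfold G in Hgb.
  assert (Eb := exp_pos (K*b)). assert (Em := exp_pos (-K*b)).
  assert (HH : (F a - q) * exp (K * a) * exp (-K*b) <= (F b - q) * exp (K*b) * exp (-K*b)).
  { apply Rmult_le_compat_r; lra. }
  rewrite !Rmult_assoc, <- !exp_plus in HH.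
  replace (K*b + -K*b) with 0 in HH by ring. rewrite exp_0 in HH.
  replace (K * a + - K * b) with (-K*(b-a)) in HH by ring. lra.
Qed.

Lemma gron_hi F dF K q a b : a <= b ->
  (forall t, a <= t <= b -> derivable_pt_lim F t (dF t)) ->
  (forall t, a < t < b -> dF t <= - K * (F t - q)) ->
  F b - q <= (F a - q) * exp (- K * (b - a)).
Proof.
  intros Hab Hd Hineq.
  assert (H := gron_lo (fun t => - F t) (fun t => - dF t) K (-q) a b Hab).
  assert (HH : (- F b - - q) >= (- F a - - q) * exp (-K * (b-a))).
  { apply H.
    - intros t Ht. apply derivable_pt_lim_opp. apply Hd; auto.
    - intros t Ht. specialize (Hineq t Ht). lra. }
  lra.
Qed.

Lemma exp_small X eps k : 0 < eps -> 0 < k ->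
  exists D, 0 <= D /\ forall t, D <= t -> X * exp (- k * t) <= eps.
Proof.
  intros He Hk. exists (Rabs X / (k * eps) + 1). split.
  { assert (0 <= Rabs X / (k*eps)). { apply Rmult_le_pos. apply Rabs_pos. left; apply Rinv_0_lt_compat; nra. } lra. }
  intros t Ht.
  assert (H1 : 0 <= Rabs X / (k*eps)). { apply Rmult_le_pos. apply Rabs_pos. left; apply Rinv_0_lt_compat; nra. }
  assert (E := exp_ineq1_le (k*t)).
  assert (Ep : exp (-k*t) * exp (k*t) = 1). { rewrite <- exp_plus. replace (-k*t + k*t) with 0 by ring. apply exp_0. }
  assert (Hkt : Rabs X <= k * t * eps).
  { assert (Hq : Rabs X / (k*eps) * (k*eps) = Rabs X) by (field; lra).
    rewrite <- Hq. assert (0 < k*eps) by nra.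
    replace (k*t*eps) with (t * (k*eps)) by ring.
    apply Rmult_le_compat_r; lra. }
  assert (Epos := exp_pos (-k*t)).
  assert (X <= Rabs X) by apply RRle_abs.
  assert (X * exp (-k*t) <= Rabs X * exp (-k*t)) by nra.
  assert (Rabs X * exp (-k*t) <= eps).
  { assert (Rabs X * exp (-k*t) * exp (k*t) <= eps * exp (k*t)).
    { rewrite Rmult_assoc, Ep. nra. }
    nra. }
  lra.
Qed.

Lemma cont_eps f x : continuity_pt f x -> forall eps, 0 < eps ->
  exists del, 0 < del /\ forall y, Rabs (y - x) < del -> Rabs (f y - f x) < eps.
Proof.
  intros H eps He. unfold continuity_pt, continue_in, limit1_in, limit_in in H.
  destruct (H eps He) as [del [Hd Hy]]. exists del. split; auto.
  intros y Hy'. destruct (Req_dec x y) as [<-|Hxy].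
  { unfold Rminus. rewrite Rplus_opp_r, Rabs_R0. exact He. }
  apply (Hy y). split. split. constructor. exact Hxy. exact Hy'.
Qed.

Lemma first_time (phi : R -> R) a b : a < b ->
  (forall t, a <= t <= b -> continuity_pt phi t) -> 0 < phi a -> phi b <= 0 ->
  exists s, a < s <= b /\ phi s <= 0 /\ forall u, a <= u < s -> 0 < phi u.
Proof.
  intros Hab Hc Ha Hb.
  set (E := fun x => a <= x <= b /\ forall u, a <= u <= x -> 0 < phi u).
  assert (Hbd : bound E). { exists b. intros x [Hx _]. lra. }
  assert (Hne : exists x, E x). { exists a. split. lra. intros u Hu. replace u with a by lra. exact Ha. }
  destruct (completeness E Hbd Hne) as [s [Hub Hlub]].
  assert (Has : a <= s). { apply Hub. split. lra. intros u Hu. replace u with a by lra. exact Ha. }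
  assert (Hsb : s <= b). { apply Hlub. intros x [Hx _]. lra. }
  assert (Hbelow : forall u, a <= u < s -> 0 < phi u).
  { intros u Hu. destruct (classic (exists x, E x /\ u < x)) as [[x [[Hx1 Hx2] Hux]]|Hn].
    - apply Hx2. lra.
    - exfalso. assert (s <= u). { apply Hlub. intros x Ex. destruct (Rle_dec x u); auto.
        exfalso; apply Hn; exists x; split; auto; lra. } lra. }
  assert (Hs : phi s <= 0).
  { destruct (Rle_dec (phi s) 0) as [|Hp]; auto. exfalso. apply Rnot_le_lt in Hp.
    destruct (cont_eps phi s (Hc s ltac:(lra)) (phi s) Hp) as [del [Hdel Hy]].
    assert (Hnear : forall y, Rabs (y - s) < del -> 0 < phi y).
    { intros y Hy'. specialize (Hy y Hy'). apply Rabs_def2 in Hy. lra. }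
    destruct (Req_dec s b) as [->|Hsb'].
    - lra.
    - set (x' := Rmin (s + del/2) b).
      assert (Ex : E x').
      { split. unfold x'. apply Rmin_case_strong; intros; lra.
        intros u Hu. destruct (Rlt_dec u s). apply Hbelow; lra.
        apply Hnear. unfold x' in Hu. apply Rabs_def1.
        - assert (u <= s + del/2). { eapply Rle_trans. apply Hu. apply Rmin_l. } lra.
        - lra. }
      assert (x' <= s) by (apply Hub; exact Ex).
      unfold x' in H. revert H. apply Rmin_case_strong; intros; lra. }
  exists s. split; [|split; auto].
  split; auto. destruct (Req_dec a s) as [<-|]; lra.
Qed.

Lemma last_time (x : R -> R) a b B : a < b ->
  (forall t, a <= t <= b -> continuity_pt x t) -> B <= x a -> x b < B ->
  exists s, a <= s < b /\ B <= x s /\ forall u, s < u <= b -> x u < B.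
Proof.
  intros Hab Hc Ha Hb.
  set (phi := fun w => B - x (a + b - w)).
  assert (Hcp : forall t, a <= t <= b -> continuity_pt phi t).
  { intros t Ht. unfold phi.
    apply continuity_pt_minus. apply continuity_pt_const. intros u v; reflexivity.
    apply (continuity_pt_comp (fun w => a + b - w) x).
    - apply continuity_pt_minus. apply continuity_pt_const. intros u v; reflexivity.
      apply derivable_continuous_pt. apply derivable_pt_id.
    - apply Hc. lra. }
  destruct (first_time phi a b Hab Hcp) as [s [Hs1 [Hs2 Hs3]]].
  - unfold phi. replace (a+b-a) with b by ring. lra.
  - unfold phi. replace (a+b-b) with a by ring. lra.
  - exists (a + b - s). split. lra. split. unfold phi in Hs2. lra.
    intros u Hu. specialize (Hs3 (a + b - u) ltac:(lra)). unfold phi in Hs3.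
    replace (a + b - (a + b - u)) with u in Hs3 by ring. lra.
Qed.

Lemma barrier x dx t1 e B k : 0 < k ->
  (forall t, t1 <= t <= e -> derivable_pt_lim x t (dx t)) ->
  (forall t, t1 < t <= e -> x t <= B -> dx t >= k) ->
  forall t, t1 <= t <= e -> B <= x t \/ x t1 + k * (t - t1) <= x t.
Proof.
  intros Hk Hd Hb t Ht.
  destruct (Req_dec t t1) as [->|Hne]. { right. lra. }
  destruct (Rle_dec B (x t)) as [|Hlt]. { left; auto. }
  apply Rnot_le_lt in Hlt.
  assert (Hc : forall u, t1 <= u <= t -> continuity_pt x u).
  { intros u Hu. apply (cont_of_deriv _ _ (dx u)). apply Hd. lra. }
  destruct (classic (exists u, t1 <= u <= t /\ B <= x u)) as [[u [Hu Hxu]]|Hn].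
  - exfalso. destruct (Req_dec u t) as [->|Hut]. lra.
    destruct (last_time x u t B ltac:(lra) ltac:(intros; apply Hc; lra) Hxu Hlt) as [s0 [Hs1 [Hs2 Hs3]]].
    destruct (MVT_cor2 x dx s0 t ltac:(lra) ltac:(intros; apply Hd; lra)) as [c0 [Heq Hc0]].
    assert (dx c0 >= k). { apply Hb. lra. left. apply Hs3. lra. }
    nra.
  - right. destruct (MVT_cor2 x dx t1 t ltac:(lra) ltac:(intros; apply Hd; lra)) as [c0 [Heq Hc0]].
    assert (dx c0 >= k). { apply Hb. lra. destruct (Rle_dec (x c0) B); auto.
      exfalso. apply Hn. exists c0. split. lra. lra. }
    nra.
Qed.

Definition Sq s d a Tmax := sqrt ((a-d)^2 + 4*a*s/Tmax).

Lemma sq_facts s d a Tmax : 0 < s -> 0 < a -> 0 < Tmax ->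
  Sq s d a Tmax * Sq s d a Tmax = (a-d)^2 + 4*a*s/Tmax /\
  a - d < Sq s d a Tmax /\ d - a < Sq s d a Tmax /\ 0 < Sq s d a Tmax.
Proof.
  intros Hs Ha HT. unfold Sq.
  assert (Hp : 0 < 4*a*s/Tmax) by (apply Rdiv_lt_0_compat; nra).
  assert (Hp2 : 0 <= (a-d)^2) by apply pow2_ge_0.
  assert (H0 : 0 <= (a-d)^2 + 4*a*s/Tmax) by lra.
  assert (E := sqrt_sqrt _ H0). assert (P := sqrt_pos ((a-d)^2 + 4*a*s/Tmax)).
  set (S := sqrt ((a - d) ^ 2 + 4 * a * s / Tmax)) in *.
  assert (Hsq : S*S > (a-d)*(a-d)) by (rewrite E; simpl; lra).
  assert (0 < S) by (destruct (Rle_dec S 0); nra).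
  repeat split; auto.
  - destruct (Rlt_dec (a-d) S); auto. nra.
  - destruct (Rlt_dec (d-a) S); auto. nra.
Qed.

Lemma T0_pos s d a Tmax : 0 < s -> 0 < a -> 0 < Tmax -> 0 < T0 s d a Tmax.
Proof.
  intros. destruct (sq_facts s d a Tmax) as [_ [Hq1 [Hq2 _]]]; auto. unfold T0. fold (Sq s d a Tmax).
  apply Rmult_lt_0_compat. apply Rdiv_lt_0_compat; lra. lra.
Qed.

Lemma g_id s d a Tmax x : 0 < s -> 0 < a -> 0 < Tmax ->
  s - d * x + a * x * (1 - x / Tmax) =
  - Sq s d a Tmax * (x - T0 s d a Tmax) - a / Tmax * (x - T0 s d a Tmax)^2.
Proof.
  intros Hs Ha HT. destruct (sq_facts s d a Tmax) as [E _]; auto.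
  unfold T0. fold (Sq s d a Tmax). set (S := Sq s d a Tmax) in *.
  assert (H : s - d * x + a * x * (1 - x / Tmax) -
    (- S * (x - Tmax / (2 * a) * (a - d + S)) - a / Tmax * (x - Tmax / (2 * a) * (a - d + S))^2)
    = Tmax/(4*a)*((a-d)^2 + 4*a*s/Tmax - S*S)) by (field; lra).
  rewrite E in H. lra.
Qed.

Lemma T0_a s d a Tmax : 0 < a -> 0 < Tmax ->
  a * T0 s d a Tmax / Tmax = (a - d + Sq s d a Tmax)/2.
Proof. intros. unfold T0. fold (Sq s d a Tmax). field. lra. Qed.

Definition mm s d a Tmax mu := mu - a * (1 - T0 s d a Tmax / Tmax).
Definition rho s d a Tmax := (Sq s d a Tmax - a + d)/2.
Definition kV p c := p / c + 1.
Definition Cc s d a Tmax b p c := 2 * (a/Tmax + b * kV p c) * T0 s d a Tmax / rho s d a Tmax + 1.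
Definition GG s d a Tmax b mu p c := b * p * T0 s d a Tmax - mm s d a Tmax mu * c.
Definition QQ s d a Tmax alpha mu p c :=
  2*a*c/Tmax + mm s d a Tmax mu * c * alpha * kV p c + 2*a*c*alpha*kV p c/Tmax.
Definition th s d a Tmax b alpha mu p c :=
  Rmin 1 (GG s d a Tmax b mu p c / (2 * (QQ s d a Tmax alpha mu p c + b*p*Cc s d a Tmax b p c))).
Definition AA s d a Tmax b alpha mu p c :=
  b * (T0 s d a Tmax - Cc s d a Tmax b p c * th s d a Tmax b alpha mu p c)
    / (1 + alpha * kV p c * th s d a Tmax b alpha mu p c).
Definition mp s d a Tmax b alpha mu p c :=
  mm s d a Tmax mu + 2 * a * th s d a Tmax b alpha mu p c / Tmax.
Definition lam s d a Tmax b alpha mu p c tau :=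
  Rmin 1 ((AA s d a Tmax b alpha mu p c * p - mp s d a Tmax b alpha mu p c * c) /
     (mp s d a Tmax b alpha mu p c + c + 1 + AA s d a Tmax b alpha mu p c * p * tau)).

Lemma param_facts s d a Tmax b alpha mu p c tau :
  0 < s -> 0 < d -> 0 < a -> 0 < Tmax -> 0 < b -> 0 < alpha ->
  0 < mu -> 0 < p -> 0 < c -> d <= mu -> 0 <= tau ->
  basic_repr_R0 s d a Tmax b mu p c > 1 ->
  0 < mm s d a Tmax mu /\ 0 < rho s d a Tmax /\
  0 < th s d a Tmax b alpha mu p c /\ th s d a Tmax b alpha mu p c <= 1 /\
  0 < T0 s d a Tmax - Cc s d a Tmax b p c * th s d a Tmax b alpha mu p c /\
  0 < mp s d a Tmax b alpha mu p c /\
  0 < AA s d a Tmax b alpha mu p c /\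
  0 < lam s d a Tmax b alpha mu p c tau /\ lam s d a Tmax b alpha mu p c tau <= 1 /\
  (lam s d a Tmax b alpha mu p c tau + mp s d a Tmax b alpha mu p c) *
  (lam s d a Tmax b alpha mu p c tau + c) <=
  AA s d a Tmax b alpha mu p c * p * exp (- lam s d a Tmax b alpha mu p c tau * tau).
Proof.
  intros Hs Hd Ha HT Hb Hal Hmu Hp Hc Hdm Htau HR.
  destruct (sq_facts s d a Tmax Hs Ha HT) as [E [S1 [S2 S3]]].
  assert (HT0 := T0_pos s d a Tmax Hs Ha HT).
  assert (HTa := T0_a s d a Tmax Ha HT).
  set (S := Sq s d a Tmax) in *. set (t0 := T0 s d a Tmax) in *.
  assert (Hm : 0 < mm s d a Tmax mu).
  { unfold mm. fold t0. assert (a * (1 - t0/Tmax) = a - a*t0/Tmax) by (field; lra). lra. }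
  assert (Hrho : 0 < rho s d a Tmax) by (unfold rho; fold S; lra).
  set (m := mm s d a Tmax mu) in *. set (r := rho s d a Tmax) in *.
  assert (HG : 0 < GG s d a Tmax b mu p c).
  { unfold GG, basic_repr_R0 in *. fold t0 m. fold t0 in HR.
    assert (H1 : b * p * t0 / c + a * (1 - t0 / Tmax) > mu).
    { apply Rmult_gt_compat_l with (r := mu) in HR; auto.
      rewrite <- Rmult_assoc, Rinv_r, Rmult_1_l, Rmult_1_r in HR; lra. }
    unfold m, mm. fold t0.
    assert (b*p*t0/c*c = b*p*t0) by (field; lra). nra. }
  set (G := GG s d a Tmax b mu p c) in *.
  assert (HkV : 0 < kV p c) by (unfold kV; assert (0 < p/c) by (apply Rdiv_lt_0_compat; lra); lra).
  set (k := kV p c) in *.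
  assert (HC : 1 <= Cc s d a Tmax b p c).
  { unfold Cc. fold t0 r k. assert (0 <= 2 * (a / Tmax + b * k) * t0 / r).
    { apply Rmult_le_pos. assert (0 < a/Tmax) by (apply Rdiv_lt_0_compat; lra).
      assert (0 < b*k) by (apply Rmult_lt_0_compat; lra).
      apply Rmult_le_pos; lra.
      left; apply Rinv_0_lt_compat; lra. } lra. }
  set (C := Cc s d a Tmax b p c) in *.
  assert (HQ : 0 < QQ s d a Tmax alpha mu p c).
  { unfold QQ. fold m k. assert (0 < 2*a*c/Tmax) by (apply Rdiv_lt_0_compat; nra).
    assert (0 < 2*a*c*alpha*k/Tmax) by (apply Rdiv_lt_0_compat; try lra; repeat apply Rmult_lt_0_compat; lra).
    assert (0 < m*c*alpha*k) by (repeat apply Rmult_lt_0_compat; lra). lra. }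
  set (Q := QQ s d a Tmax alpha mu p c) in *.
  assert (Hq2 : 0 < G / (2 * (Q + b*p*C))).
  { apply Rdiv_lt_0_compat; auto. assert (0 < b*p*C) by (repeat apply Rmult_lt_0_compat; lra). lra. }
  assert (Hth : 0 < th s d a Tmax b alpha mu p c /\ th s d a Tmax b alpha mu p c <= 1 /\
     th s d a Tmax b alpha mu p c * (Q + b*p*C) <= G/2).
  { unfold th. fold G Q C. apply Rmin_case_strong; intros Hle.
    - split. lra. split. lra. assert (0 < b*p*C) by (repeat apply Rmult_lt_0_compat; lra).
      assert (G / (2 * (Q + b * p * C)) * (Q + b*p*C) = G/2) by (field; lra). nra.
    - split. auto. split. auto.
      assert (0 < b*p*C) by (repeat apply Rmult_lt_0_compat; lra).
      assert (G / (2 * (Q + b * p * C)) * (Q + b*p*C) = G/2) by (field; lra). lra. }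
  destruct Hth as [Hth0 [Hth1 Hth2]].
  set (h := th s d a Tmax b alpha mu p c) in *.
  assert (HGd : G = b*p*t0 - m*c) by reflexivity.
  assert (HmcG : m * c < b*p*t0) by lra.
  assert (HTC : 0 < t0 - C * h).
  { assert (0 < m*c) by nra. assert (b*p*C*h <= G/2).
    { assert (0 <= Q*h) by nra. nra. }
    assert (0 < b*p) by nra.
    assert (Hlt : b*p*(C*h) < b*p*t0) by nra.
    apply Rmult_lt_reg_l in Hlt; lra. }
  assert (Hmp : 0 < mp s d a Tmax b alpha mu p c).
  { unfold mp. fold m h. assert (0 < 2*a*h/Tmax) by (apply Rdiv_lt_0_compat; nra). lra. }
  set (m' := mp s d a Tmax b alpha mu p c) in *.
  assert (HA : 0 < AA s d a Tmax b alpha mu p c).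
  { unfold AA. fold t0 C h k. assert (0 < alpha*k*h) by (repeat apply Rmult_lt_0_compat; lra).
    apply Rdiv_lt_0_compat. apply Rmult_lt_0_compat; lra. lra. }
  set (A := AA s d a Tmax b alpha mu p c) in *.
  assert (HAp : m' * c < A * p).
  { unfold A, AA. fold t0 C h k. unfold m', mp. fold m h.
    assert (0 < alpha*k*h) by (repeat apply Rmult_lt_0_compat; lra).
    assert (Hden : 0 < 1 + alpha*k*h) by lra.
    apply Rmult_lt_reg_r with (r := 1 + alpha*k*h); auto.
    replace (b * (t0 - C * h) / (1 + alpha * k * h) * p * (1 + alpha * k * h))
      with (b*p*t0 - b*p*C*h) by (field; lra).
    assert (Hexp : (m + 2 * a * h / Tmax) * c * (1 + alpha * k * h) =
       m*c + h*(2*a*c/Tmax + m*c*alpha*k) + h*h*(2*a*c*alpha*k/Tmax)) by (field; lra).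
    rewrite Hexp.
    assert (0 < 2*a*c*alpha*k/Tmax) by (apply Rdiv_lt_0_compat; try lra; repeat apply Rmult_lt_0_compat; lra).
    assert (h*h*(2*a*c*alpha*k/Tmax) <= h*(2*a*c*alpha*k/Tmax)).
    { assert (h*h <= h*1) by (apply Rmult_le_compat_l; lra).
      apply Rmult_le_compat_r; lra. }
    assert (h*Q = h*(2*a*c/Tmax + m*c*alpha*k) + h*(2*a*c*alpha*k/Tmax)) by (unfold Q, QQ; fold m k; field; lra).
    assert (h*Q + h*(b*p*C) <= G/2) by (rewrite <- Rmult_plus_distr_l; lra).
    lra. }
  assert (0 <= A*p*tau) by (apply Rmult_le_pos; [left; apply Rmult_lt_0_compat|]; lra).
  assert (Hden : 0 < m' + c + 1 + A*p*tau) by lra.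
  assert (Hl : 0 < lam s d a Tmax b alpha mu p c tau /\ lam s d a Tmax b alpha mu p c tau <= 1 /\
     lam s d a Tmax b alpha mu p c tau * (m' + c + 1 + A*p*tau) <= A*p - m'*c).
  { unfold lam. fold A m'. apply Rmin_case_strong; intros Hle.
    - split. lra. split. lra.
      assert ((A * p - m' * c) / (m' + c + 1 + A * p * tau) * (m' + c + 1 + A * p * tau) = A*p - m'*c) by (field; lra).
      nra.
    - split. apply Rdiv_lt_0_compat; lra. split. auto.
      right. field. lra. }
  destruct Hl as [Hl0 [Hl1 Hl2]]. set (l := lam s d a Tmax b alpha mu p c tau) in *.
  repeat split; auto.
  assert (Ee := exp_ineq1_le (- l * tau)).
  assert (0 <= l*tau) by nra.
  assert (A*p*(1 + - l*tau) <= A*p*exp (-l*tau)) by (apply Rmult_le_compat_l; nra).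
  nra.
Qed.

Lemma sat_nonneg b alpha x v : 0 < b -> 0 < alpha -> 0 <= x -> 0 <= v -> 0 <= b*x*v/(1+alpha*v).
Proof. intros. apply Rmult_le_pos. apply Rmult_le_pos. nra. lra. left; apply Rinv_0_lt_compat; nra. Qed.

Lemma sat_le1 b alpha x v : 0 < b -> 0 < alpha -> 0 <= x -> 0 <= v -> b*x*v/(1+alpha*v) <= b*x*v.
Proof.
  intros. assert (0 < 1 + alpha*v) by nra. assert (0 <= b*x*v) by (apply Rmult_le_pos; nra).
  unfold Rdiv. rewrite <- (Rmult_1_r (b*x*v)) at 2. apply Rmult_le_compat_l; auto.
  rewrite <- Rinv_1. apply Rinv_le_contravar; nra.
Qed.

Lemma sat_le2 b alpha x v : 0 < b -> 0 < alpha -> 0 <= x -> 0 <= v -> b*x*v/(1+alpha*v) <= b*x/alpha.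
Proof.
  intros. assert (0 < 1 + alpha*v) by nra. assert (0 <= b*x) by nra.
  replace (b*x*v/(1+alpha*v)) with (b*x * (v/(1+alpha*v))) by (field; lra).
  replace (b*x/alpha) with (b*x * (1/alpha)) by (field; lra).
  apply Rmult_le_compat_l; auto.
  apply Rmult_le_reg_r with ((1+alpha*v)*alpha). nra.
  replace (v / (1 + alpha * v) * ((1 + alpha * v) * alpha)) with (v*alpha) by (field; lra).
  replace (1 / alpha * ((1 + alpha * v) * alpha)) with (1 + alpha*v) by (field; lra). lra.
Qed.

Lemma sat_ge b alpha x v w : 0 < b -> 0 < alpha -> 0 <= x -> 0 <= v -> v <= w ->
  b*x*v/(1+alpha*w) <= b*x*v/(1+alpha*v).
Proof.
  intros. assert (0 < 1 + alpha*v) by nra. assert (0 < 1 + alpha*w) by nra.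
  assert (0 <= b*x*v) by (apply Rmult_le_pos; nra).
  unfold Rdiv. apply Rmult_le_compat_l; auto. apply Rinv_le_contravar; nra.
Qed.

Lemma logi_le a Tmax x y : 0 < a -> 0 < Tmax -> 0 <= x -> 0 <= y -> a*x*(1 - (x+y)/Tmax) <= a*Tmax/4.
Proof.
  intros. assert (a*x*(1 - (x+y)/Tmax) = a*x*(1 - x/Tmax) - a*x*y/Tmax) by (field; lra).
  assert (a*x*(1 - x/Tmax) - a*Tmax/4 = -(a/Tmax)*(x - Tmax/2)^2) by (field; lra).
  assert (0 <= a/Tmax) by (left; apply Rdiv_lt_0_compat; lra).
  assert (0 <= (x - Tmax/2)^2) by apply pow2_ge_0.
  assert (0 <= a/Tmax * (x - Tmax/2)^2) by (apply Rmult_le_pos; auto).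
  assert (0 <= a*x*y/Tmax) by (apply Rmult_le_pos; [apply Rmult_le_pos; nra| left; apply Rinv_0_lt_compat; lra]).
  lra.
Qed.

Definition P_ok s d a Tmax b alpha mu p c tau :=
  0 < s /\ 0 < d /\ 0 < a /\ 0 < Tmax /\ 0 < b /\ 0 < alpha /\
  0 < mu /\ 0 < p /\ 0 < c /\ d <= mu /\ 0 <= tau.

Definition phi3 (T I V : R -> R) u := Rmin (T u) (Rmin (I u) (V u)).

Lemma cont_Rmin f g x : continuity_pt f x -> continuity_pt g x -> continuity_pt (fun u => Rmin (f u) (g u)) x.
Proof.
  intros Hf Hg.
  assert (E : forall u, Rmin (f u) (g u) = (f u + g u - Rabs (f u - g u)) / 2).
  { intros u. unfold Rmin. destruct (Rle_dec (f u) (g u)).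
    - rewrite Rabs_left1 by lra. field.
    - rewrite Rabs_right by lra. field. }
  apply continuity_pt_locally_ext with (f := fun u => (f u + g u - Rabs (f u - g u)) / 2) (a := 1).
  lra. { intros u _. rewrite E. reflexivity. }
  apply continuity_pt_mult. 2: apply continuity_pt_const; intros u v; reflexivity.
  apply continuity_pt_minus. apply continuity_pt_plus; auto.
  apply (continuity_pt_comp (fun u => f u - g u) Rabs).
  apply continuity_pt_minus; auto. apply Rcontinuity_abs.
Qed.

Lemma positivity s d a Tmax b alpha mu p c tau T I V :
  P_ok s d a Tmax b alpha mu p c tau ->
  positive_initial_data tau T I V ->
  is_solution s d a Tmax b alpha mu p c tau T I V ->
  forall t, -tau <= t -> 0 < T t /\ 0 < I t /\ 0 < V t.
Proof.
  intros [Hs [Hd [Ha [HT [Hb [Hal [Hmu [Hp [Hc [Hdm Htau]]]]]]]]]] [_ [_ [_ Hinit]]] [HcT [HcI [HcV Hder]]].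
  assert (Hright : forall f, cont_on_from tau f -> 0 < f 0 -> exists del, 0 < del /\ forall x, 0 <= x < del -> 0 < f x).
  { intros f Hf Hf0. destruct (Hf 0 ltac:(lra) (f 0 / 2) ltac:(lra)) as [del [Hdel Hx]].
    exists del. split; auto. intros x Hxx. specialize (Hx x ltac:(lra)).
    rewrite Rminus_0_r, Rabs_right in Hx by lra. specialize (Hx ltac:(lra)).
    apply Rabs_def2 in Hx. lra. }
  destruct (Hinit 0 ltac:(lra)) as [HT0 [HI0 HV0]].
  destruct (Hright T HcT HT0) as [d1 [Hd1 H1]].
  destruct (Hright I HcI HI0) as [d2 [Hd2 H2]].
  destruct (Hright V HcV HV0) as [d3 [Hd3 H3]].
  set (de := Rmin d1 (Rmin d2 d3) / 2).
  assert (Hde : 0 < de /\ de < d1 /\ de < d2 /\ de < d3).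
  { unfold de. repeat apply Rmin_case_strong; intros; lra. }
  assert (Hsmall : forall x, 0 <= x <= de -> 0 < T x /\ 0 < I x /\ 0 < V x).
  { intros x Hx. repeat split; [apply H1|apply H2|apply H3]; lra. }
  intros t Ht.
  destruct (Rle_dec t 0) as [Ht0|Ht0]. { apply Hinit. lra. }
  destruct (Rle_dec t de) as [Htd|Htd]. { apply Hsmall. lra. }
  apply NNPP. intro Hneg.
  assert (Hcont : forall u, 0 < u -> continuity_pt T u /\ continuity_pt I u /\ continuity_pt V u).
  { intros u Hu. destruct (Hder u Hu) as [A1 [A2 A3]].
    repeat split; eapply cont_of_deriv; eauto. }
  assert (Hphi_c : forall u, de <= u <= t -> continuity_pt (phi3 T I V) u).
  { intros u Hu. destruct (Hcont u ltac:(lra)) as [C1 [C2 C3]]. unfold phi3.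
    apply cont_Rmin; auto. apply cont_Rmin; auto. }
  assert (Hpd : 0 < phi3 T I V de).
  { destruct (Hsmall de ltac:(lra)) as [P1 [P2 P3]]. unfold phi3.
    repeat apply Rmin_case_strong; intros; lra. }
  assert (Hpt : phi3 T I V t <= 0).
  { unfold phi3. destruct (Rle_dec (Rmin (T t) (Rmin (I t) (V t))) 0); auto.
    exfalso. apply Hneg. revert n. repeat apply Rmin_case_strong; intros; repeat split; lra. }
  destruct (first_time _ de t ltac:(lra) Hphi_c Hpd Hpt) as [s0 [Hs0 [Hps Hbef]]].
  assert (Hposb : forall u, -tau <= u < s0 -> 0 < T u /\ 0 < I u /\ 0 < V u).
  { intros u Hu. destruct (Rle_dec u 0). apply Hinit; lra.
    destruct (Rle_dec u de). apply Hsmall; lra.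
    specialize (Hbef u ltac:(lra)). unfold phi3 in Hbef. revert Hbef.
    repeat apply Rmin_case_strong; intros; repeat split; lra. }
  destruct (continuity_ab_maj (fun u => T u + I u + V u) de s0 ltac:(lra)) as [Mx [HMx _]].
  { intros u Hu. destruct (Hcont u ltac:(lra)) as [C1 [C2 C3]].
    apply continuity_pt_plus; auto. apply continuity_pt_plus; auto. }
  set (Mb := T Mx + I Mx + V Mx) in *.
  assert (HMb : forall u, de < u < s0 -> T u + I u <= Mb /\ V u <= Mb).
  { intros u Hu. specialize (HMx u ltac:(lra)). destruct (Hposb u ltac:(lra)) as [P1 [P2 P3]]. simpl in HMx. lra. }
  assert (HMb0 : 0 <= Mb).
  { destruct (Hposb de ltac:(lra)) as [P1 [P2 P3]]. specialize (HMx de ltac:(lra)). simpl in HMx. lra. }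
  assert (HdT : forall u, de <= u <= s0 -> derivable_pt_lim T u _) by (intros u Hu; apply (proj1 (Hder u ltac:(lra)))).
  assert (HdI : forall u, de <= u <= s0 -> derivable_pt_lim I u _) by (intros u Hu; apply (proj1 (proj2 (Hder u ltac:(lra))))).
  assert (HdV : forall u, de <= u <= s0 -> derivable_pt_lim V u _) by (intros u Hu; apply (proj2 (proj2 (Hder u ltac:(lra))))).
  assert (HaM : 0 <= a * Mb / Tmax) by (apply Rmult_le_pos; [nra|left; apply Rinv_0_lt_compat; lra]).
  assert (PT : 0 < T s0).
  { assert (G := gron_lo T _ (d + a*Mb/Tmax + b*Mb) 0 de s0 ltac:(lra) HdT).
    assert (Hg : T s0 - 0 >= (T de - 0) * exp (- (d + a*Mb/Tmax + b*Mb) * (s0 - de))).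
    { apply G. intros u Hu. destruct (Hposb u ltac:(lra)) as [P1 [P2 P3]]. destruct (HMb u Hu) as [M1 M2].
      assert (S1 := sat_le1 b alpha (T u) (V u) Hb Hal ltac:(lra) ltac:(lra)).
      assert (a * T u * (1 - (T u + I u) / Tmax) >= - (a * Mb / Tmax) * T u).
      { assert (a * T u * (1 - (T u + I u) / Tmax) = a * T u - T u * (a * (T u + I u) / Tmax)) by (field; lra).
        assert (a * (T u + I u) / Tmax <= a*Mb/Tmax).
        { unfold Rdiv. apply Rmult_le_compat_r. left; apply Rinv_0_lt_compat; lra. nra. }
        nra. }
      assert (0 <= b*T u) by (apply Rmult_le_pos; lra).
      assert (0 <= b * T u * (Mb - V u)) by (apply Rmult_le_pos; lra).
      lra. }
    assert (0 < exp (- (d + a*Mb/Tmax + b*Mb) * (s0 - de))) by apply exp_pos.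
    destruct (Hsmall de ltac:(lra)) as [P1 _]. nra. }
  assert (PI : 0 < I s0).
  { assert (G := gron_lo I _ (a*Mb/Tmax + mu) 0 de s0 ltac:(lra) HdI).
    assert (Hg : I s0 - 0 >= (I de - 0) * exp (- (a*Mb/Tmax + mu) * (s0 - de))).
    { apply G. intros u Hu. destruct (Hposb u ltac:(lra)) as [P1 [P2 P3]]. destruct (HMb u Hu) as [M1 M2].
      destruct (Hposb (u - tau) ltac:(lra)) as [Q1 [Q2 Q3]].
      assert (S1 := sat_nonneg b alpha (T (u-tau)) (V (u-tau)) Hb Hal ltac:(lra) ltac:(lra)).
      assert (a * I u * (1 - (T u + I u) / Tmax) >= - (a * Mb / Tmax) * I u).
      { assert (a * I u * (1 - (T u + I u) / Tmax) = a * I u - I u * (a * (T u + I u) / Tmax)) by (field; lra).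
        assert (a * (T u + I u) / Tmax <= a*Mb/Tmax).
        { unfold Rdiv. apply Rmult_le_compat_r. left; apply Rinv_0_lt_compat; lra. nra. }
        nra. }
      nra. }
    assert (0 < exp (- (a*Mb/Tmax + mu) * (s0 - de))) by apply exp_pos.
    destruct (Hsmall de ltac:(lra)) as [_ [P1 _]]. nra. }
  assert (PV : 0 < V s0).
  { assert (G := gron_lo V _ c 0 de s0 ltac:(lra) HdV).
    assert (Hg : V s0 - 0 >= (V de - 0) * exp (- c * (s0 - de))).
    { apply G. intros u Hu. destruct (Hposb u ltac:(lra)) as [P1 [P2 P3]]. nra. }
    assert (0 < exp (- c * (s0 - de))) by apply exp_pos.
    destruct (Hsmall de ltac:(lra)) as [_ [_ P1]]. nra. }
  revert Hps. unfold phi3. repeat apply Rmin_case_strong; intros; lra.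
Qed.

Lemma eventually_le F dF K q t1 eps : 0 < K -> 0 < eps ->
  (forall t, t1 <= t -> derivable_pt_lim F t (dF t)) ->
  (forall t, t1 < t -> dF t <= - K * (F t - q)) ->
  exists t2, t1 <= t2 /\ forall t, t2 <= t -> F t <= q + eps.
Proof.
  intros HK He Hd Hi. destruct (exp_small (F t1 - q) eps K He HK) as [D [HD HD2]].
  exists (t1 + D). split. lra. intros t Ht.
  assert (G := gron_hi F dF K q t1 t ltac:(lra) ltac:(intros; apply Hd; lra) ltac:(intros; apply Hi; lra)).
  specialize (HD2 (t - t1) ltac:(lra)). lra.
Qed.

Lemma eventually_ge F dF K q t1 eps : 0 < K -> 0 < eps ->
  (forall t, t1 <= t -> derivable_pt_lim F t (dF t)) ->
  (forall t, t1 < t -> dF t >= - K * (F t - q)) ->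
  exists t2, t1 <= t2 /\ forall t, t2 <= t -> q - eps <= F t.
Proof.
  intros HK He Hd Hi. destruct (exp_small (q - F t1) eps K He HK) as [D [HD HD2]].
  exists (t1 + D). split. lra. intros t Ht.
  assert (G := gron_lo F dF K q t1 t ltac:(lra) ltac:(intros; apply Hd; lra) ltac:(intros; apply Hi; lra)).
  specialize (HD2 (t - t1) ltac:(lra)). lra.
Qed.

Definition MT s d a Tmax := (s + a*Tmax/4)/d + 1.
Definition MI s d a Tmax b alpha mu := (b/alpha*MT s d a Tmax + a*Tmax/4)/mu + 1.
Definition MV s d a Tmax b alpha mu p c := p*MI s d a Tmax b alpha mu/c + 1.

Lemma dissip s d a Tmax b alpha mu p c tau T I V :
  P_ok s d a Tmax b alpha mu p c tau ->
  positive_initial_data tau T I V ->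
  is_solution s d a Tmax b alpha mu p c tau T I V ->
  exists tB, 1 <= tB /\ forall t, tB <= t ->
    T t <= MT s d a Tmax /\ I t <= MI s d a Tmax b alpha mu /\ V t <= MV s d a Tmax b alpha mu p c.
Proof.
  intros Hok Hini Hsol.
  assert (Hpos := positivity _ _ _ _ _ _ _ _ _ _ _ _ _ Hok Hini Hsol).
  destruct Hok as [Hs [Hd [Ha [HT [Hb [Hal [Hmu [Hp [Hc [Hdm Htau]]]]]]]]]].
  destruct Hsol as [_ [_ [_ Hder]]].
  destruct (eventually_le T _ d ((s + a*Tmax/4)/d) 1 1 Hd ltac:(lra)
    ltac:(intros t Ht; apply (proj1 (Hder t ltac:(lra))))) as [tT [HtT HTb]].
  { intros t Ht. destruct (Hpos t ltac:(lra)) as [P1 [P2 P3]].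
    assert (L := logi_le a Tmax (T t) (I t) Ha HT ltac:(lra) ltac:(lra)).
    assert (S := sat_nonneg b alpha (T t) (V t) Hb Hal ltac:(lra) ltac:(lra)).
    assert (- d * (T t - (s + a * Tmax / 4) / d) = s + a*Tmax/4 - d * T t) by (field; lra).
    lra. }
  set (mt := MT s d a Tmax).
  assert (HTb' : forall t, tT <= t -> T t <= mt) by (intros; unfold mt, MT; apply HTb; auto).
  assert (Hmt : 0 < mt).
  { unfold mt, MT. assert (0 < (s + a*Tmax/4)/d) by (apply Rdiv_lt_0_compat; nra). lra. }
  destruct (eventually_le I _ mu ((b/alpha*mt + a*Tmax/4)/mu) (tT + tau + 1) 1 Hmu ltac:(lra)
    ltac:(intros t Ht; apply (proj1 (proj2 (Hder t ltac:(lra)))))) as [tI [HtI HIb]].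
  { intros t Ht. destruct (Hpos t ltac:(lra)) as [P1 [P2 P3]].
    destruct (Hpos (t - tau) ltac:(lra)) as [Q1 [Q2 Q3]].
    assert (L := logi_le a Tmax (I t) (T t) Ha HT ltac:(lra) ltac:(lra)).
    replace (T t + I t) with (I t + T t) by ring.
    assert (S := sat_le2 b alpha (T (t-tau)) (V (t-tau)) Hb Hal ltac:(lra) ltac:(lra)).
    assert (b * T (t-tau) / alpha <= b / alpha * mt).
    { assert (T (t-tau) <= mt) by (apply HTb'; lra).
      assert (0 < b/alpha) by (apply Rdiv_lt_0_compat; lra).
      replace (b * T (t-tau) / alpha) with (b/alpha * T (t-tau)) by (field; lra). nra. }
    assert (- mu * (I t - (b / alpha * mt + a * Tmax / 4) / mu) = b / alpha * mt + a * Tmax / 4 - mu * I t) by (field; lra).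
    lra. }
  set (mi := MI s d a Tmax b alpha mu).
  assert (HIb' : forall t, tI <= t -> I t <= mi) by (intros; unfold mi, MI; fold mt; apply HIb; auto).
  destruct (eventually_le V _ c (p*mi/c) tI 1 Hc ltac:(lra)
    ltac:(intros t Ht; apply (proj2 (proj2 (Hder t ltac:(lra)))))) as [tV [HtV HVb]].
  { intros t Ht. assert (I t <= mi) by (apply HIb'; lra).
    assert (- c * (V t - p*mi/c) = p*mi - c * V t) by (field; lra). nra. }
  exists tV. split. lra. intros t Ht. split. apply HTb'. lra. split. apply HIb'. lra.
  unfold MV. fold mi. apply HVb. auto.
Qed.

Lemma deriv_sub u l t0 t : derivable_pt_lim (fun t => u * exp (l * (t - t0))) t (l * (u * exp (l * (t - t0)))).
Proof.
  replace (l * (u * exp (l * (t - t0)))) with (0 * exp (l*(t-t0)) + u * (exp (l * (t - t0)) * l)) by ring.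
  apply (derivable_pt_lim_mult (fun _ => u) (fun t => exp (l * (t - t0)))).
  apply derivable_pt_lim_const.
  apply (derivable_pt_lim_comp (fun t => l * (t - t0)) exp).
  - assert (H0 := derivable_pt_lim_minus (fun t => t) (fun _ => t0) t 1 0
       (derivable_pt_lim_id t) (derivable_pt_lim_const t0 t)).
    assert (H1 := derivable_pt_lim_scal _ l t _ H0).
    unfold mult_real_fct, minus_fct in H1. replace (l * (1 - 0)) with l in H1 by ring. exact H1.
  - apply derivable_pt_lim_exp.
Qed.

Lemma exp_mono x y : x <= y -> exp x <= exp y.
Proof. intros [H|H]. left; apply exp_increasing; auto. subst; lra. Qed.

Definition KI s d a Tmax b alpha mu := a * (MT s d a Tmax + MI s d a Tmax b alpha mu) / Tmax + mu.

Lemma I_lower s d a Tmax b alpha mu p c tau T I V :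
  P_ok s d a Tmax b alpha mu p c tau ->
  positive_initial_data tau T I V ->
  is_solution s d a Tmax b alpha mu p c tau T I V ->
  forall tB, 1 <= tB -> (forall t, tB <= t ->
    T t <= MT s d a Tmax /\ I t <= MI s d a Tmax b alpha mu /\ V t <= MV s d a Tmax b alpha mu p c) ->
  forall ta t, tB <= ta -> ta <= t -> I t >= I ta * exp (- KI s d a Tmax b alpha mu * (t - ta)).
Proof.
  intros Hok Hini Hsol tB HtB Hbd ta t Hta Ht.
  assert (Hpos := positivity _ _ _ _ _ _ _ _ _ _ _ _ _ Hok Hini Hsol).
  destruct Hok as [Hs [Hd [Ha [HT [Hb [Hal [Hmu [Hp [Hc [Hdm Htau]]]]]]]]]].
  destruct Hsol as [_ [_ [_ Hder]]].
  assert (G := gron_lo I _ (KI s d a Tmax b alpha mu) 0 ta t Ht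
     ltac:(intros u Hu; apply (proj1 (proj2 (Hder u ltac:(lra)))))).
  assert (HH : I t - 0 >= (I ta - 0) * exp (- KI s d a Tmax b alpha mu * (t - ta))).
  2: lra.
  apply G. intros u Hu. destruct (Hpos u ltac:(lra)) as [P1 [P2 P3]].
  destruct (Hpos (u - tau) ltac:(lra)) as [Q1 [Q2 Q3]].
  destruct (Hbd u ltac:(lra)) as [B1 [B2 B3]].
  assert (S1 := sat_nonneg b alpha (T (u-tau)) (V (u-tau)) Hb Hal ltac:(lra) ltac:(lra)).
  unfold KI.
  assert (a * I u * (1 - (T u + I u) / Tmax) - mu * I u + (a * (MT s d a Tmax + MI s d a Tmax b alpha mu) / Tmax + mu) * I u
     = a * I u + I u * (a/Tmax) * (MT s d a Tmax + MI s d a Tmax b alpha mu - (T u + I u))) by (field; lra).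
  assert (0 <= I u * (a/Tmax) * (MT s d a Tmax + MI s d a Tmax b alpha mu - (T u + I u))).
  { apply Rmult_le_pos. apply Rmult_le_pos. lra. left; apply Rdiv_lt_0_compat; lra. lra. }
  assert (0 <= a * I u) by nra.
  lra.
Qed.

Lemma core s d a Tmax b alpha mu p c tau :
  P_ok s d a Tmax b alpha mu p c tau ->
  basic_repr_R0 s d a Tmax b mu p c > 1 ->
  exists W : R -> R,
  forall T I V, positive_initial_data tau T I V -> is_solution s d a Tmax b alpha mu p c tau T I V ->
  forall tB, 1 <= tB -> (forall t, tB <= t ->
    T t <= MT s d a Tmax /\ I t <= MI s d a Tmax b alpha mu /\ V t <= MV s d a Tmax b alpha mu p c) ->
  forall ta i, tB <= ta -> 0 < i -> i <= I ta ->
  ~ (forall u, ta < u <= ta + W i -> I u < th s d a Tmax b alpha mu p c).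
Proof.
  intros Hok HR0.
  assert (Hok' := Hok).
  destruct Hok' as [Hs [Hd [Ha [HT [Hb [Hal [Hmu [Hp [Hc [Hdm Htau]]]]]]]]]].
  destruct (param_facts s d a Tmax b alpha mu p c tau Hs Hd Ha HT Hb Hal Hmu Hp Hc Hdm Htau HR0)
    as [Hm [Hr [Hh0 [Hh1 [HTC [Hmp [HA [Hl0 [Hl1 Hkey]]]]]]]]].
  destruct (sq_facts s d a Tmax Hs Ha HT) as [_ [_ [_ HS]]].
  assert (HT0 := T0_pos s d a Tmax Hs Ha HT).
  assert (HTa := T0_a s d a Tmax Ha HT).
  set (mt := MT s d a Tmax) in *. set (mi := MI s d a Tmax b alpha mu) in *.
  set (mv := MV s d a Tmax b alpha mu p c) in *.
  set (S := Sq s d a Tmax) in *. set (t0 := T0 s d a Tmax) in *.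
  set (h := th s d a Tmax b alpha mu p c) in *. set (k := kV p c) in *.
  set (C := Cc s d a Tmax b p c) in *. set (r := rho s d a Tmax) in *.
  set (A := AA s d a Tmax b alpha mu p c) in *. set (m' := mp s d a Tmax b alpha mu p c) in *.
  set (l := lam s d a Tmax b alpha mu p c tau) in *.
  set (KIc := KI s d a Tmax b alpha mu).
  assert (Hk : 0 < k) by (unfold k, kV; assert (0 < p/c) by (apply Rdiv_lt_0_compat; lra); lra).
  assert (HC : 0 < C).
  { unfold C, Cc. fold t0 r k. assert (0 < a/Tmax) by (apply Rdiv_lt_0_compat; lra).
    assert (0 < 2 * (a / Tmax + b * k) * t0 / r).
    { apply Rdiv_lt_0_compat; auto. apply Rmult_lt_0_compat; auto. nra. } lra. }
  assert (Hmt : 0 < mt).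
  { unfold mt, MT. assert (0 < (s + a*Tmax/4)/d) by (apply Rdiv_lt_0_compat; nra). lra. }
  assert (Hmi : 0 < mi).
  { unfold mi, MI. fold mt. assert (0 < b/alpha) by (apply Rdiv_lt_0_compat; lra).
    assert (0 < (b/alpha*mt + a*Tmax/4)/mu) by (apply Rdiv_lt_0_compat; nra). lra. }
  assert (Hmv : 0 < mv).
  { unfold mv, MV. fold mi. assert (0 < p*mi/c) by (apply Rdiv_lt_0_compat; nra). lra. }
  destruct (exp_small mv h c Hh0 Hc) as [D1 [HD1 HD1']].
  destruct (exp_small mt h S Hh0 HS) as [D2 [HD2 HD2']].
  set (kap := h * r).
  assert (Hkap : 0 < kap) by (unfold kap; nra).
  assert (Ht0k : 0 < t0 / kap) by (apply Rdiv_lt_0_compat; lra).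
  set (Dset := D1 + D2 + t0/kap + 1).
  set (iI := fun i => i * exp (- KIc * (Dset + tau))).
  set (iV := fun i => p * iI i / c * (1 - exp (- c))).
  set (vv := fun i => Rmin (iV i) (p * iI i / (l + c)) / 2).
  set (uu := fun i => (l + c) * vv i / p).
  exists (fun i => Dset + tau + h / (uu i * l) + 1).
  intros T I V Hini Hsol tB HtB Hbd ta i Hta Hi0 Hi Hwin0.
  assert (Hpos := positivity _ _ _ _ _ _ _ _ _ _ _ _ _ Hok Hini Hsol).
  assert (HIlow := I_lower _ _ _ _ _ _ _ _ _ _ _ _ _ Hok Hini Hsol tB HtB Hbd).
  fold mt mi mv in Hbd.
  destruct Hsol as [_ [_ [_ Hder]]].
  assert (Hec : 0 < 1 - exp (- c)).
  { assert (exp (-c) < exp 0) by (apply exp_increasing; lra). rewrite exp_0 in H. lra. }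
  assert (HiI : 0 < iI i) by (unfold iI; apply Rmult_lt_0_compat; auto; apply exp_pos).
  assert (HiV : 0 < iV i) by (unfold iV; apply Rmult_lt_0_compat; auto; apply Rdiv_lt_0_compat; nra).
  set (v := vv i). set (u := uu i).
  assert (Hv : 0 < v /\ v < iV i /\ (l + c) * v / p < iI i).
  { unfold v, vv. assert (0 < p * iI i / (l+c)) by (apply Rdiv_lt_0_compat; nra).
    apply Rmin_case_strong; intros Hle.
    - split. lra. split. lra. assert ((l+c) * (iV i / 2) / p <= (l+c) * (p * iI i / (l + c)/2) / p).
      { unfold Rdiv. apply Rmult_le_compat_r. left; apply Rinv_0_lt_compat; lra.
        apply Rmult_le_compat_l; lra. }
      assert ((l+c) * (p * iI i / (l + c)/2) / p = iI i / 2) by (field; lra). lra.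
    - split. lra. split. lra. assert ((l+c) * (p * iI i / (l + c)/2) / p = iI i / 2) by (field; lra). lra. }
  destruct Hv as [Hv0 [Hv1 Hv2]].
  assert (Hu0 : 0 < u) by (unfold u, uu; fold v; apply Rdiv_lt_0_compat; nra).
  assert (Hu1 : u < iI i) by (unfold u, uu; fold v; lra).
  assert (Hpu : p * u = (l + c) * v) by (unfold u, uu; fold v; field; lra).
  set (t2 := ta + Dset + tau).
  set (te := t2 + h / (u * l)).
  assert (Et2 : t2 = ta + Dset + tau) by reflexivity.
  assert (Ete : te = t2 + h / (u * l)) by reflexivity.
  assert (EDset : Dset = D1 + D2 + t0/kap + 1) by reflexivity.
  assert (Hhu : 0 < h / (u * l)) by (apply Rdiv_lt_0_compat; nra).
  assert (Hwin : forall w, ta < w <= te -> I w < h).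
  { intros w Hw. apply Hwin0. fold u. unfold te, t2 in Hw. lra. }
  assert (HDs : 1 <= Dset) by (unfold Dset; lra).
  assert (HVup : forall t, ta + D1 <= t <= te -> V t <= k * h).
  { intros t Ht.
    assert (G := gron_hi V _ c (p*h/c) ta t ltac:(lra)
       ltac:(intros w Hw; apply (proj2 (proj2 (Hder w ltac:(lra)))))).
    assert (HG : V t - p*h/c <= (V ta - p*h/c) * exp (- c * (t - ta))).
    { apply G. intros w Hw. assert (I w < h) by (apply Hwin; lra).
      assert (- c * (V w - p*h/c) = p*h - c * V w) by (field; lra). nra. }
    specialize (HD1' (t - ta) ltac:(lra)).
    destruct (Hbd ta ltac:(lra)) as [_ [_ B3]].
    assert (0 <= p*h/c) by (left; apply Rdiv_lt_0_compat; nra).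
    assert ((V ta - p*h/c) * exp (- c * (t - ta)) <= mv * exp (- c * (t - ta))).
    { apply Rmult_le_compat_r. left; apply exp_pos. lra. }
    assert (k * h = p*h/c + h) by (unfold k, kV; field; lra). lra. }
  assert (HTup : forall t, ta + D2 <= t -> T t <= t0 + h).
  { intros t Ht.
    assert (G := gron_hi T _ S t0 ta t ltac:(lra)
       ltac:(intros w Hw; apply (proj1 (Hder w ltac:(lra))))).
    assert (HG : T t - t0 <= (T ta - t0) * exp (- S * (t - ta))).
    { apply G. intros w Hw. destruct (Hpos w ltac:(lra)) as [P1 [P2 P3]].
      assert (Hg := g_id s d a Tmax (T w) Hs Ha HT). fold S t0 in Hg.
      assert (a * T w * (1 - (T w + I w) / Tmax) = a * T w * (1 - T w / Tmax) - a * T w * I w / Tmax) by (field; lra).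
      assert (0 <= a * T w * I w / Tmax) by (apply Rmult_le_pos; [apply Rmult_le_pos; nra| left; apply Rinv_0_lt_compat; lra]).
      assert (S1 := sat_nonneg b alpha (T w) (V w) Hb Hal ltac:(lra) ltac:(lra)).
      assert (0 <= a / Tmax * (T w - t0)^2).
      { apply Rmult_le_pos. left; apply Rdiv_lt_0_compat; lra. apply pow2_ge_0. }
      lra. }
    specialize (HD2' (t - ta) ltac:(lra)).
    destruct (Hbd ta ltac:(lra)) as [B1 _].
    assert ((T ta - t0) * exp (- S * (t - ta)) <= mt * exp (- S * (t - ta))).
    { apply Rmult_le_compat_r. left; apply exp_pos. lra. }
    lra. }
  assert (HTlo : forall t, ta + D1 + t0/kap <= t <= te -> t0 - C * h <= T t).
  { intros t Ht.
    assert (Bar := barrier T _ (ta + D1) te (t0 - C*h) kap Hkap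
      ltac:(intros w Hw; apply (proj1 (Hder w ltac:(lra))))).
    assert (Hcond : forall w, ta + D1 < w <= te -> T w <= t0 - C*h ->
      s - d * T w + a * T w * (1 - (T w + I w) / Tmax) - b * T w * V w / (1 + alpha * V w) >= kap).
    { intros w Hw HTw. destruct (Hpos w ltac:(lra)) as [P1 [P2 P3]].
      assert (HIw : I w < h) by (apply Hwin; lra).
      assert (HVw : V w <= k*h) by (apply HVup; lra).
      assert (Hg := g_id s d a Tmax (T w) Hs Ha HT). fold S t0 in Hg.
      assert (HCh : 0 < C * h) by (apply Rmult_lt_0_compat; lra).
      set (y := t0 - T w).
      assert (Hy1 : C * h <= y) by (unfold y; lra).
      assert (Hy2 : y < t0) by (unfold y; lra).
      assert (Hgy : s - d * T w + a * T w * (1 - T w / Tmax) = y * (S - a / Tmax * y)).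
      { rewrite Hg. unfold y. field. lra. }
      assert (Hrr : S - a / Tmax * t0 = r).
      { unfold r, rho. fold S. replace (a / Tmax * t0) with (a * t0 / Tmax) by (field; lra). rewrite HTa. field. }
      assert (HSy : r <= S - a / Tmax * y).
      { assert (a / Tmax * y <= a / Tmax * t0) by (apply Rmult_le_compat_l; [left; apply Rdiv_lt_0_compat|]; lra). lra. }
      assert (Hg1 : C * h * r <= y * (S - a / Tmax * y)).
      { apply Rmult_le_compat; lra. }
      assert (HCdef : C * h * r = 2 * (a/Tmax + b * k) * t0 * h + h * r).
      { unfold C, Cc. fold t0 r k. field. lra. }
      assert (a * T w * (1 - (T w + I w) / Tmax) = a * T w * (1 - T w / Tmax) - a * T w * I w / Tmax) by (field; lra).
      assert (S1 := sat_le1 b alpha (T w) (V w) Hb Hal ltac:(lra) ltac:(lra)).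
      assert (Hti : a * T w * I w / Tmax <= a / Tmax * (t0 * h)).
      { replace (a * T w * I w / Tmax) with (a/Tmax * (T w * I w)) by (field; lra).
        apply Rmult_le_compat_l. left; apply Rdiv_lt_0_compat; lra.
        apply Rmult_le_compat; lra. }
      assert (Htv : b * T w * V w <= b * k * t0 * h).
      { replace (b * T w * V w) with (b * (T w * V w)) by ring.
        replace (b * k * t0 * h) with (b * (t0 * (k * h))) by ring.
        apply Rmult_le_compat_l. lra. apply Rmult_le_compat; lra. }
      assert (0 <= (a/Tmax + b*k) * t0 * h).
      { apply Rmult_le_pos; [apply Rmult_le_pos|]; try lra.
        assert (0 < a/Tmax) by (apply Rdiv_lt_0_compat; lra). nra. }
      unfold kap. lra. }
    destruct (Bar Hcond t ltac:(lra)) as [|Hb2]; auto.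
    { assert (kap * (t - (ta + D1)) >= t0).
      { assert (kap * (t0 / kap) = t0) by (field; lra). nra. }
      destruct (Hpos (ta + D1) ltac:(lra)) as [P1 _].
      assert (0 <= C * h) by nra. lra. } }
  assert (HIl2 : forall t, ta <= t <= t2 -> iI i <= I t).
  { intros t Ht. specialize (HIlow ta t Hta ltac:(lra)). fold KIc in HIlow.
    unfold iI.
    assert (exp (- KIc * (Dset + tau)) <= exp (- KIc * (t - ta))).
    { apply exp_mono. assert (0 < KIc).
      { unfold KIc, KI. fold mt mi. assert (0 < a*(mt+mi)/Tmax) by (apply Rdiv_lt_0_compat; nra). lra. }
      unfold t2 in Ht. nra. }
    assert (i * exp (- KIc * (Dset + tau)) <= I ta * exp (- KIc * (t - ta))).
    { apply Rmult_le_compat; try lra. left; apply exp_pos. }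
    lra. }
  assert (HVl : forall t, ta + 1 <= t <= t2 -> iV i <= V t).
  { intros t Ht.
    assert (G := gron_lo V _ c (p * iI i / c) ta t ltac:(lra)
       ltac:(intros w Hw; apply (proj2 (proj2 (Hder w ltac:(lra)))))).
    assert (HG : V t - p * iI i / c >= (V ta - p * iI i / c) * exp (- c * (t - ta))).
    { apply G. intros w Hw. assert (iI i <= I w) by (apply HIl2; lra).
      assert (- c * (V w - p * iI i / c) = p * iI i - c * V w) by (field; lra). nra. }
    destruct (Hpos ta ltac:(lra)) as [_ [_ P3]].
    assert (Hq : 0 < p * iI i / c) by (apply Rdiv_lt_0_compat; nra).
    assert (exp (- c * (t - ta)) <= exp (- c)) by (apply exp_mono; nra).
    assert ((V ta - p * iI i / c) * exp (- c * (t - ta)) >= - (p * iI i / c) * exp (- c)).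
    { assert (0 < exp (- c * (t - ta))) by apply exp_pos. nra. }
    unfold iV. lra. }
  set (Is := fun w => u * exp (l * (w - t2))).
  set (Vs := fun w => v * exp (l * (w - t2))).
  set (phi := fun w => Rmin (I w - Is w) (V w - Vs w)).
  assert (Hcmp : forall t, t2 <= t <= te -> 0 < phi t).
  { intros t Ht. apply NNPP. intro Hn. apply Rnot_lt_le in Hn.
    assert (Hphi2 : 0 < phi t2).
    { unfold phi, Is, Vs. replace (t2 - t2) with 0 by ring. rewrite Rmult_0_r, exp_0, !Rmult_1_r.
      assert (iI i <= I t2) by (apply HIl2; unfold t2; lra). assert (iV i <= V t2) by (apply HVl; unfold t2; lra).
      apply Rmin_case_strong; intros; lra. }
    assert (Htt2 : t2 < t) by (destruct (Req_dec t t2) as [E|E]; [rewrite E in Hn; lra|lra]).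
    assert (Hc_phi : forall w, t2 <= w <= t -> continuity_pt phi w).
    { intros w Hw. destruct (Hder w ltac:(unfold t2 in *; lra)) as [A1 [A2 A3]]. unfold phi.
      apply cont_Rmin.
      - apply continuity_pt_minus. eapply cont_of_deriv; eauto. unfold Is. eapply cont_of_deriv. apply deriv_sub.
      - apply continuity_pt_minus. eapply cont_of_deriv; eauto. unfold Vs. eapply cont_of_deriv. apply deriv_sub. }
    destruct (first_time phi t2 t Htt2 Hc_phi Hphi2 Hn) as [s0 [Hs0 [Hps Hbef]]].
    assert (Hbef2 : forall w, t2 <= w < s0 -> Is w < I w /\ Vs w < V w).
    { intros w Hw. specialize (Hbef w Hw). unfold phi in Hbef. revert Hbef.
      apply Rmin_case_strong; intros; lra. }
    assert (Hdel : forall w, t2 < w < s0 -> Vs (w - tau) <= V (w - tau)).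
    { intros w Hw. destruct (Rlt_dec (w - tau) t2).
      - assert (iV i <= V (w - tau)) by (apply HVl; unfold t2 in *; lra).
        unfold Vs. assert (exp (l * (w - tau - t2)) <= 1).
        { rewrite <- exp_0. apply exp_mono. nra. }
        nra.
      - left. apply Hbef2. lra. }
    assert (HDI : I s0 - Is s0 > 0).
    { assert (G := gron_lo (fun w => I w - Is w) (fun w => (b * T (w - tau) * V (w - tau) / (1 + alpha * V (w - tau)) + a * I w * (1 - (T w + I w) / Tmax) - mu * I w) - l * (u * exp (l * (w - t2)))) m' 0 t2 s0 ltac:(lra)).
      assert (HG : I s0 - Is s0 - 0 >= (I t2 - Is t2 - 0) * exp (- m' * (s0 - t2))).
      { apply G.
        - intros w Hw. apply derivable_pt_lim_minus. apply (proj1 (proj2 (Hder w ltac:(lra)))). apply deriv_sub.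
        - intros w Hw. fold (Is w).
          destruct (Hpos w ltac:(lra)) as [P1 [P2 P3]].
          destruct (Hpos (w - tau) ltac:(lra)) as [Q1 [Q2 Q3]].
          assert (HIw : I w < h) by (apply Hwin; lra).
          assert (HTw : T w <= t0 + h) by (apply HTup; unfold t2, Dset in Hw; lra).
          assert (HTd : t0 - C * h <= T (w - tau)) by (apply HTlo; unfold t2, Dset in Hw; lra).
          assert (HVd : V (w - tau) <= k * h) by (apply HVup; unfold t2, Dset in Hw; lra).
          assert (Hsub := Hdel w Hw).
          assert (Hf : A * V (w - tau) <= b * T (w - tau) * V (w - tau) / (1 + alpha * V (w - tau))).
          { assert (S1 := sat_ge b alpha (T (w-tau)) (V (w-tau)) (k*h) Hb Hal ltac:(lra) ltac:(lra) HVd).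
            assert (Hden : 0 < 1 + alpha * (k*h)) by nra.
            assert (A * V (w - tau) <= b * T (w - tau) * V (w - tau) / (1 + alpha * (k * h))).
            { unfold A, AA. fold t0 C h k.
              replace (b * (t0 - C * h) / (1 + alpha * k * h) * V (w - tau)) with
                 ((b * (t0 - C*h) * V (w - tau)) / (1 + alpha * (k*h))) by (field; lra).
              unfold Rdiv. apply Rmult_le_compat_r. left; apply Rinv_0_lt_compat; lra.
              apply Rmult_le_compat_r. lra. apply Rmult_le_compat_l; lra. }
            lra. }
          assert (Hlog : a * I w * (1 - (T w + I w) / Tmax) - mu * I w >= - m' * I w).
          { unfold m', mp, mm. fold t0 h.
            assert (a * I w * (1 - (T w + I w) / Tmax) - mu * I w + (mu - a * (1 - t0 / Tmax) + 2 * a * h / Tmax) * I w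
               = I w * (a / Tmax) * (t0 + 2*h - (T w + I w))) by (field; lra).
            assert (0 <= I w * (a / Tmax) * (t0 + 2*h - (T w + I w))).
            { apply Rmult_le_pos. apply Rmult_le_pos. lra. left; apply Rdiv_lt_0_compat; lra. lra. }
            lra. }
          unfold Is, Vs in *.
          assert (Hsplit : exp (l * (w - tau - t2)) = exp (- l * tau) * exp (l * (w - t2))).
          { rewrite <- exp_plus. f_equal. ring. }
          rewrite Hsplit in Hsub.
          set (E := exp (l * (w - t2))) in *.
          assert (HE : 0 < E) by apply exp_pos.
          assert (Hkey2 : (l + m') * u <= A * v * exp (- l * tau)).
          { assert ((l + m') * u * p = (l + m') * (l + c) * v) by (transitivity ((l+m')*(p*u)); [ring| rewrite Hpu; ring]).
            assert ((l + m') * (l + c) * v <= A * p * exp (- l * tau) * v) by (apply Rmult_le_compat_r; lra).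
            apply Rmult_le_reg_r with p. lra. nra. }
          assert (A * (v * (exp (- l * tau) * E)) <= A * V (w - tau)) by (apply Rmult_le_compat_l; lra).
          assert ((l + m') * u * E <= A * v * exp (- l * tau) * E) by (apply Rmult_le_compat_r; lra).
          nra. }
      assert (Hi2 : Is t2 < I t2).
      { unfold Is. replace (t2 - t2) with 0 by ring. rewrite Rmult_0_r, exp_0, Rmult_1_r.
        assert (iI i <= I t2) by (apply HIl2; lra). lra. }
      assert (0 < exp (- m' * (s0 - t2))) by apply exp_pos. nra. }
    assert (HDV : V s0 - Vs s0 > 0).
    { assert (G := gron_lo (fun w => V w - Vs w) (fun w => (p * I w - c * V w) - l * (v * exp (l * (w - t2)))) c 0 t2 s0 ltac:(lra)).
      assert (HG : V s0 - Vs s0 - 0 >= (V t2 - Vs t2 - 0) * exp (- c * (s0 - t2))).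
      { apply G.
        - intros w Hw. apply derivable_pt_lim_minus. apply (proj2 (proj2 (Hder w ltac:(lra)))). apply deriv_sub.
        - intros w Hw. fold (Vs w).
          destruct (Hbef2 w ltac:(lra)) as [B1 B2].
          unfold Is, Vs in *.
          set (E := exp (l * (w - t2))) in *.
          assert (p * (u * E) = (l + c) * (v * E)) by (rewrite <- Rmult_assoc, Hpu; ring).
          nra. }
      assert (Hv2b : Vs t2 < V t2).
      { unfold Vs. replace (t2 - t2) with 0 by ring. rewrite Rmult_0_r, exp_0, Rmult_1_r.
        assert (iV i <= V t2) by (apply HVl; lra). lra. }
      assert (0 < exp (- c * (s0 - t2))) by apply exp_pos. nra. }
    revert Hps. unfold phi. apply Rmin_case_strong; intros; lra. }
  assert (Hfin := Hcmp te ltac:(unfold te; lra)).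
  assert (HIte : I te < h) by (apply Hwin; unfold te, t2; lra).
  assert (Hexp : u + h <= Is te).
  { unfold Is, te. replace (l * (t2 + h / (u * l) - t2)) with (h / u) by (field; lra).
    assert (E := exp_ineq1_le (h / u)).
    assert (u * (1 + h/u) = u + h) by (field; lra).
    assert (u * (1 + h/u) <= u * exp (h/u)) by (apply Rmult_le_compat_l; lra). lra. }
  revert Hfin. unfold phi. apply Rmin_case_strong; intros; lra.
Qed.

Theorem theorem7 (s d a Tmax b alpha mu p c tau : R) :
  0 < s -> 0 < d -> 0 < a -> 0 < Tmax -> 0 < b -> 0 < alpha ->
  0 < mu -> 0 < p -> 0 < c -> d <= mu -> 0 <= tau ->
  basic_repr_R0 s d a Tmax b mu p c > 1 ->
  permanent s d a Tmax b alpha mu p c tau.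
Proof.
  intros Hs Hd Ha HT Hb Hal Hmu Hp Hc Hdm Htau HR0.
  assert (Hok : P_ok s d a Tmax b alpha mu p c tau) by (repeat split; auto).
  destruct (param_facts s d a Tmax b alpha mu p c tau Hs Hd Ha HT Hb Hal Hmu Hp Hc Hdm Htau HR0)
    as [_ [_ [Hh0 _]]].
  destruct (core s d a Tmax b alpha mu p c tau Hok HR0) as [W HW].
  set (h := th s d a Tmax b alpha mu p c) in *.
  set (mt := MT s d a Tmax). set (mi := MI s d a Tmax b alpha mu).
  set (mv := MV s d a Tmax b alpha mu p c).
  set (KIc := KI s d a Tmax b alpha mu).
  assert (Hmt : 0 < mt).
  { unfold mt, MT. assert (0 < (s + a*Tmax/4)/d) by (apply Rdiv_lt_0_compat; nra). lra. }
  assert (Hmi : 0 < mi).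
  { unfold mi, MI. fold mt. assert (0 < b/alpha) by (apply Rdiv_lt_0_compat; lra).
    assert (0 < (b/alpha*mt + a*Tmax/4)/mu) by (apply Rdiv_lt_0_compat; nra). lra. }
  assert (Hmv : 0 < mv).
  { unfold mv, MV. fold mi. assert (0 < p*mi/c) by (apply Rdiv_lt_0_compat; nra). lra. }
  assert (HKI : 0 < KIc).
  { unfold KIc, KI. fold mt mi. assert (0 < a*(mt+mi)/Tmax) by (apply Rdiv_lt_0_compat; nra). lra. }
  set (KT := d + a * (mt + mi) / Tmax + b * mv).
  assert (HKT : 0 < KT).
  { unfold KT. assert (0 < a*(mt+mi)/Tmax) by (apply Rdiv_lt_0_compat; nra). nra. }
  set (etaT := s / (2 * KT)).
  set (etaI := Rmin h (h * exp (- KIc * W h))).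
  set (etaV := p * etaI / (2 * c)).
  assert (HeT : 0 < etaT) by (apply Rdiv_lt_0_compat; lra).
  assert (HeI : 0 < etaI).
  { unfold etaI. apply Rmin_case_strong; intros; auto. apply Rmult_lt_0_compat; auto. apply exp_pos. }
  assert (HeV : 0 < etaV) by (apply Rdiv_lt_0_compat; [apply Rmult_lt_0_compat|]; lra).
  exists (mt + mi + mv), (Rmin etaT (Rmin etaI etaV)).
  split. { apply Rmin_case_strong; intros; [lra| apply Rmin_case_strong; intros; lra]. }
  assert (Hm1 : Rmin etaT (Rmin etaI etaV) <= etaT) by apply Rmin_l.
  assert (Hm2 : Rmin etaT (Rmin etaI etaV) <= etaI) by (eapply Rle_trans; [apply Rmin_r| apply Rmin_l]).
  assert (Hm3 : Rmin etaT (Rmin etaI etaV) <= etaV) by (eapply Rle_trans; [apply Rmin_r| apply Rmin_r]).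
  set (eta := Rmin etaT (Rmin etaI etaV)) in *.
  intros T I V Hini Hsol.
  assert (Hpos := positivity _ _ _ _ _ _ _ _ _ _ _ _ _ Hok Hini Hsol).
  assert (HIlow := I_lower _ _ _ _ _ _ _ _ _ _ _ _ _ Hok Hini Hsol).
  destruct (dissip _ _ _ _ _ _ _ _ _ _ _ _ _ Hok Hini Hsol) as [tB [HtB Hbd]].
  fold mt mi mv in Hbd.
  assert (HWc := HW T I V Hini Hsol tB HtB Hbd).
  destruct Hsol as [Hc1 [Hc2 [Hc3 Hder]]].
  split.
  { exists tB. intros t Ht. destruct (Hbd t Ht) as [B1 [B2 B3]].
    destruct (Hpos t ltac:(lra)) as [P1 [P2 P3]]. lra. }
  destruct (Hpos tB ltac:(lra)) as [_ [PI0 _]].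
  assert (Hex : exists ts, tB < ts /\ h <= I ts).
  { specialize (HWc tB (I tB) ltac:(lra) PI0 ltac:(lra)).
    apply not_all_ex_not in HWc. destruct HWc as [u Hu].
    exists u. apply imply_to_and in Hu. destruct Hu as [Hu1 Hu2]. split. lra. lra. }
  destruct Hex as [ts [Hts1 Hts2]].
  assert (HIp : forall t, ts <= t -> etaI <= I t).
  { intros t Ht. destruct (Rle_dec h (I t)) as [Hge|Hlt].
    { unfold etaI. eapply Rle_trans. apply Rmin_l. auto. }
    apply Rnot_le_lt in Hlt.
    assert (Htt : ts < t) by (destruct (Req_dec ts t) as [E|E]; [rewrite <- E in Hlt; lra|lra]).
    destruct (last_time I ts t h Htt ltac:(intros w Hw; eapply cont_of_deriv; apply (proj1 (proj2 (Hder w ltac:(lra))))) Hts2 Hlt)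
      as [s0 [Hs0 [Hs1 Hs2]]].
    destruct (Rle_dec (t - s0) (W h)) as [Hle|Hgt].
    - assert (G := HIlow tB HtB Hbd s0 t ltac:(lra) ltac:(lra)). fold KIc in G.
      assert (exp (- KIc * W h) <= exp (- KIc * (t - s0))) by (apply exp_mono; nra).
      assert (h * exp (- KIc * W h) <= I s0 * exp (- KIc * (t - s0))).
      { apply Rmult_le_compat; try lra. left; apply exp_pos. }
      unfold etaI. eapply Rle_trans. apply Rmin_r. lra.
    - exfalso. apply (HWc s0 h ltac:(lra) Hh0 Hs1).
      intros u Hu. apply Hs2. lra. }
  split; [|split].
  -
    destruct (eventually_ge T _ KT (s / KT) tB (s / (2*KT)) HKT ltac:(apply Rdiv_lt_0_compat; lra)
      ltac:(intros t Ht; apply (proj1 (Hder t ltac:(lra))))) as [t1 [Ht1 HT1]].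
    { intros t Ht. destruct (Hpos t ltac:(lra)) as [P1 [P2 P3]]. destruct (Hbd t ltac:(lra)) as [B1 [B2 B3]].
      assert (S1 := sat_le1 b alpha (T t) (V t) Hb Hal ltac:(lra) ltac:(lra)).
      assert (a * T t * (1 - (T t + I t) / Tmax) = a * T t - T t * (a * (T t + I t) / Tmax)) by (field; lra).
      assert (a * (T t + I t) / Tmax <= a*(mt+mi)/Tmax).
      { unfold Rdiv. apply Rmult_le_compat_r. left; apply Rinv_0_lt_compat; lra. nra. }
      assert (0 <= a * T t) by nra.
      assert (T t * (a * (T t + I t) / Tmax) <= T t * (a*(mt+mi)/Tmax)) by (apply Rmult_le_compat_l; lra).
      assert (b * T t * V t <= T t * (b * mv)).
      { replace (b * T t * V t) with (T t * (b * V t)) by ring. apply Rmult_le_compat_l. lra. nra. }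
      assert (- KT * (T t - s / KT) = s - KT * T t) by (field; lra).
      unfold KT in *. nra. }
    intros eps Heps. exists t1. intros t Ht. specialize (HT1 t Ht).
    assert (s / KT - s / (2 * KT) = etaT) by (unfold etaT; field; lra). lra.
  - intros eps Heps. exists ts. intros t Ht. specialize (HIp t Ht). lra.
  - destruct (eventually_le (fun t => - V t) (fun t => - (p * I t - c * V t)) c (- (p * etaI / c)) ts (p * etaI / (2*c)) Hc
      ltac:(apply Rdiv_lt_0_compat; nra)) as [t1 [Ht1 HV1]].
    { intros t Ht. apply derivable_pt_lim_opp. apply (proj2 (proj2 (Hder t ltac:(lra)))). }
    { intros t Ht. specialize (HIp t ltac:(lra)).
      assert (- c * (- V t - - (p * etaI / c)) = - (p * etaI - c * V t)) by (field; lra). nra. }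
    intros eps Heps. exists t1. intros t Ht. specialize (HV1 t Ht). simpl in HV1.
    assert (p * etaI / c - p * etaI / (2 * c) = etaV) by (unfold etaV; field; lra). lra.
Qed.
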